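(* Let $(\mathcal{M},\mathrm{dist})$ be a metric space, $\mathcal{F}\subset2^{\mathcal{M}}$, and $J_\beta:\mathcal{M}\to\mathbb{R}\cup\{+\infty\}$, $0<\beta<+\infty$, lower semi-continuous with $J_{\beta_1}\le J_{\beta_2}$ whenever $\beta_1\le\beta_2$; let $J_\infty=\sup_{\beta>0}J_\beta$ and $c_\beta=\inf_{A\in\mathcal{F}}\sup_AJ_\beta\in\mathbb{R}$ for all $0<\beta\le+\infty$. Assume (F1) every $A\in\mathcal{F}$ is closed, and (F2') for every $(A_n)\subset\mathcal{F}$ such that, for some $\beta$, $A_n\subset\mathcal{M}^{c_\infty+1}_\beta$ for all $n$, $\limsup_nA_n\in\mathcal{F}$. For every $0<\beta\le+\infty$ let $\eta_\beta:\mathcal{M}^{c_\infty+1}_\beta\to\mathcal{M}^{c_\infty+1}_\beta$ satisfy $(\eta1)_\beta$: $\eta_\beta(A)\in\mathcal{F}$ whenever $A\in\mathcal{F}$, $A\subset\mathcal{M}^{c_\infty+1}_\beta$; and $(\eta2)_\beta$: $J_\beta(\eta_\beta(x))\le J_\beta(x)$ for all $x\in\mathcal{M}^{c_\infty+1}_\beta$; and suppose $(J_\beta,\eta_\beta)$ satisfies $(PS)_{c_\beta}$. Then, for every $0<\beta\le+\infty$, every optimal set for $J_\beta$ at $c_\beta$ intersects $\mathcal{K}_\beta$; in particular $\mathcal{K}_\beta\neq\emptyset$.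
   Context: $\mathcal{M}^{c'}_\beta=\{x\in\mathcal{M}:J_\beta(x)\le c'\}$. A set $A$ is optimal for $J$ at $c$ if $A\in\mathcal{F}$ and $\sup_AJ=c$. $\limsup_nA_n$ is the set of limits of sequences $x_{n_j}\in A_{n_j}$, $n_j\to\infty$. $\mathcal{K}_\beta=\{x\in\mathcal{M}:J_\beta(x)=J_\beta(\eta_\beta(x))=c_\beta\}$. $(J_\beta,\eta_\beta)$ satisfies $(PS)_{c_\beta}$ if every sequence $(x_n)\subset\mathcal{M}$ with $J_\beta(x_n)\to c_\beta$ and $J_\beta(\eta_\beta(x_n))\to c_\beta$ has a subsequence converging to some $\bar x\in\mathcal{K}_\beta$. *)

(* Defs.v *)
From HB Require Import structures.
From mathcomp Require Import all_boot all_order all_algebra.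
From mathcomp Require Import all_classical all_reals all_analysis.
Set Implicit Arguments. Unset Strict Implicit. Unset Printing Implicit Defensive.
Import Order.TTheory GRing.Theory Num.Theory.
Local Open Scope classical_set_scope.
Local Open Scope ring_scope.
Local Open Scope ereal_scope.

Section defs.
Context {R : realType} {M : pseudoMetricType R}.

Definition Jinf (J : R -> M -> \bar R) (x : M) : \bar R :=
  ereal_sup [set J b x | b in [set b : R | (0 < b)%R]].

(* J_beta for beta in (0, +oo] : finite beta = b%:E, beta = +oo gives J_infty *)
Definition Jext (J : R -> M -> \bar R) (b : \bar R) : M -> \bar R :=
  match b with
  | r%:E => J r
  | _ => Jinf J
  end.

Definition cval (J : R -> M -> \bar R) (F : set (set M)) (b : \bar R) : \bar R :=
  ereal_inf [set ereal_sup (Jext J b @` A) | A in F].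

Definition sublevel (J : R -> M -> \bar R) (b c : \bar R) : set M :=
  [set x | Jext J b x <= c].

Definition limsup_sets (A : nat -> set M) : set M :=
  [set x | exists (phi : nat -> nat) (y : nat -> M),
      phi @ \oo --> \oo /\ (forall j, A (phi j) (y j)) /\ y @ \oo --> x].

Definition optimal (J : R -> M -> \bar R) (F : set (set M)) (b : \bar R) (A : set M) :=
  F A /\ ereal_sup (Jext J b @` A) = cval J F b.

Definition Kset (J : R -> M -> \bar R) (F : set (set M)) (eta : \bar R -> M -> M)
  (b : \bar R) : set M :=
  [set x | Jext J b x = cval J F b /\ Jext J b (eta b x) = cval J F b].

(* (PS)_{c_beta} for (J_beta, eta_beta); sequences are taken in the domain
   M^{c_infty+1}_beta of eta_beta *)
Definition PS_cond (J : R -> M -> \bar R) (F : set (set M)) (eta : \bar R -> M -> M)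
  (b : \bar R) :=
  forall x : nat -> M,
    (forall n, sublevel J b (cval J F +oo + 1) (x n)) ->
    (fun n => Jext J b (x n)) @ \oo --> cval J F b ->
    (fun n => Jext J b (eta b (x n))) @ \oo --> cval J F b ->
    exists (phi : nat -> nat) (xbar : M),
      (forall i j, (i < j)%N -> (phi i < phi j)%N) /\
      (x \o phi) @ \oo --> xbar /\ Kset J F eta b xbar.

End defs.

(* Main.v *)
Require Import Defs.
From HB Require Import structures.
From mathcomp Require Import all_boot all_order all_algebra.
From mathcomp Require Import all_classical all_reals all_analysis.
Import Order.TTheory GRing.Theory Num.Theory.
Local Open Scope classical_set_scope.
Local Open Scope ring_scope.
Local Open Scope ereal_scope.

Lemma cvg_pm (R : realType) (c : \bar R) (s : R) : c \is a fin_num ->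
  (fun n => c + (s * harmonic n)%:E) @ \oo --> c.
Proof.
move=> cf.
have h : (fun n => (s * harmonic n)%:E) @ \oo --> 0.
  apply: cvg_EFin; first exact: nearW.
  rewrite -(mulr0 s); apply: cvgMr; exact: cvg_harmonic.
have := cvgeD _ (cvg_cst c) h.
rewrite adde0; apply; by rewrite fin_num_adde_defl.
Qed.

Lemma key (R : realType) (M : pseudoMetricType R)
  (F : set (set M)) (J : R -> M -> \bar R) (eta : \bar R -> M -> M) (b : \bar R)
  (cfin : cval J F b \is a fin_num)
  (cle : cval J F b <= cval J F +oo)
  (Heta1 : forall A, F A ->
     A `<=` sublevel J b (cval J F +oo + 1) -> F (eta b @` A))
  (Heta2 : forall x,
     sublevel J b (cval J F +oo + 1) x -> Jext J b (eta b x) <= Jext J b x)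
  (HPS : PS_cond J F eta b)
  (A : nat -> set M) (FA : forall n, F (A n))
  (supA : forall n, ereal_sup (Jext J b @` A n) <= cval J F b + (harmonic n)%:E) :
  exists (phi : nat -> nat) (x : nat -> M) (xbar : M),
    (forall n, A n (x n)) /\ (forall i j, (i < j)%N -> (phi i < phi j)%N) /\
    (x \o phi) @ \oo --> xbar /\ Kset J F eta b xbar.
Proof.
set c := cval J F b.
have sub : forall n, A n `<=` sublevel J b (cval J F +oo + 1).
  move=> n y Ay; rewrite /sublevel /=.
  have h1 : Jext J b y <= ereal_sup (Jext J b @` A n).
    by apply: ereal_sup_ubound; exists y.
  apply: (le_trans h1); apply: (le_trans (supA n)).
  apply: leeD => //; rewrite lee_fin /= invf_le1 // ler1n //.
have ex : forall n, exists y, A n y /\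
    c - (harmonic n)%:E < Jext J b (eta b y).
  move=> n.
  have : c - (harmonic n)%:E < ereal_sup (Jext J b @` (eta b @` A n)).
    have h : c <= ereal_sup (Jext J b @` (eta b @` A n)).
      by apply: ereal_inf_lbound; exists (eta b @` A n) => //; apply: Heta1.
    apply: lt_le_trans h.
    by rewrite lteBlDr // lteDl // lte_fin; exact: harmonic_gt0.
  case/ereal_sup_gt => _ [_ [y Ay <-] <-] lt; by exists y.
have [x hx] := choice ex.
have bnd : forall n, c - (harmonic n)%:E < Jext J b (eta b (x n)) /\
    Jext J b (eta b (x n)) <= Jext J b (x n) /\
    Jext J b (x n) <= c + (harmonic n)%:E.
  move=> n; have [Ax lt] := hx n; split => //; split.
    exact: Heta2 (sub _ _ Ax).
  have h1 : Jext J b (x n) <= ereal_sup (Jext J b @` A n).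
    by apply: ereal_sup_ubound; exists (x n).
  exact: (le_trans h1 (supA n)).
have lo : (fun n => c - (harmonic n)%:E) @ \oo --> c.
  have := @cvg_pm _ c (-1)%R cfin.
  by under eq_fun do rewrite mulN1r EFinN.
have hi : (fun n => c + (harmonic n)%:E) @ \oo --> c.
  have := @cvg_pm _ c 1%R cfin.
  by under eq_fun do rewrite mul1r.
have c1 : (fun n => Jext J b (eta b (x n))) @ \oo --> c.
  apply: (squeeze_cvge _ lo hi); apply: nearW => n.
  have [h1 [h2 h3]] := bnd n.
  by rewrite (ltW h1) (le_trans h2 h3).
have c2 : (fun n => Jext J b (x n)) @ \oo --> c.
  apply: (squeeze_cvge _ lo hi); apply: nearW => n.
  have [h1 [h2 h3]] := bnd n.
  by rewrite h3 (le_trans (ltW h1) h2).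
have [phi [xbar [phiinc [cv K]]]] :=
  HPS x (fun n => sub n _ (proj1 (hx n))) c2 c1.
by exists phi, x, xbar; split => //; move=> n; exact: (proj1 (hx n)).
Qed.

Lemma cle_inf (R : realType) (M : pseudoMetricType R)
  (F : set (set M)) (J : R -> M -> \bar R) (b : \bar R) :
  0 < b -> cval J F b <= cval J F +oo.
Proof.
case: b => [r| |] hb //.
rewrite lte_fin in hb.
apply: le_ereal_inf_tmp => _ [A FA <-].
have h : cval J F r%:E <= ereal_sup (Jext J r%:E @` A).
  by apply: ereal_inf_lbound; exists A.
apply: (le_trans h); apply: ge_ereal_sup => _ [x Ax <-] /=.
have h1 : Jinf J x <= ereal_sup (Jext J +oo @` A).
  by apply: ereal_sup_ubound; exists x.
apply: le_trans h1.
by apply: ereal_sup_ubound; exists r.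
Qed.

Theorem theorem2p8 (R : realType) (M : pseudoMetricType R)
  (F : set (set M)) (J : R -> M -> \bar R) (eta : \bar R -> M -> M)
  (Hmetric : hausdorff_space M)
  (HJval : forall b x, (0 < b)%R -> J b x != -oo)
  (HJlsc : forall b, (0 < b)%R -> lower_semicontinuous (J b))
  (HJmono : forall b1 b2 x, (0 < b1)%R -> (b1 <= b2)%R -> J b1 x <= J b2 x)
  (Hc : forall b, 0 < b -> cval J F b \is a fin_num)
  (F1 : forall A, F A -> closed A)
  (F2' : forall A : nat -> set M, (forall n, F (A n)) ->
     (exists b : R, (0 < b)%R /\
        forall n, A n `<=` sublevel J b%:E (cval J F +oo + 1)) ->
     F (limsup_sets A))
  (Heta_maps : forall b, 0 < b -> forall x,
     sublevel J b (cval J F +oo + 1) x -> sublevel J b (cval J F +oo + 1) (eta b x))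
  (Heta1 : forall b, 0 < b -> forall A, F A ->
     A `<=` sublevel J b (cval J F +oo + 1) -> F (eta b @` A))
  (Heta2 : forall b, 0 < b -> forall x,
     sublevel J b (cval J F +oo + 1) x -> Jext J b (eta b x) <= Jext J b x)
  (HPS : forall b, 0 < b -> PS_cond J F eta b) :
  forall b : \bar R, 0 < b ->
    (forall A, optimal J F b A -> exists2 x, A x & Kset J F eta b x) /\
    (exists x, Kset J F eta b x).
Proof.
move=> b hb.
have cfin := Hc b hb.
have cle := @cle_inf R M F J b hb.
have K := @key R M F J eta b cfin cle (Heta1 b hb) (Heta2 b hb) (HPS b hb).
split.
  move=> A [FA supA].
  have [phi [x [xbar [Ax [_ [cv Kx]]]]]] := K (fun _ => A) (fun _ => FA)
    (fun n => ltac:(rewrite supA; apply: leeDl; rewrite lee_fin; exact: harmonic_ge0)).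
  exists xbar => //.
  apply: (closed_cvg _ (F1 _ FA) _ _ cv).
  by apply: nearW => n; exact: Ax.
have ex : forall n, exists A, F A /\
    ereal_sup (Jext J b @` A) <= cval J F b + (harmonic n)%:E.
  move=> n.
  have [_ [A FA <-] lt] := lb_ereal_inf_adherent (harmonic_gt0 n) cfin.
  by exists A; split => //; apply: ltW.
have [A hA] := choice ex.
have [phi [x [xbar [Ax [_ [cv Kx]]]]]] :=
  K A (fun n => proj1 (hA n)) (fun n => proj2 (hA n)).
by exists xbar.
Qed.
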